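(* There is an injective ring homomorphism $\Delta\colon\Lambda\to\Gamma$ such that the ring embeddings $K\to\Lambda$ and $\Lambda\to\Gamma$ compose to the ring embedding $K\to\Gamma$.
   Context: $K$ is a division ring, $(Q,Z)$ a gentle pair (locally gentle with finitely many admissible paths), $\boldsymbol{\sigma}\colon Q_1\to\operatorname{Aut}(K)$, $a\mapsto\sigma_a$. The semilinear path algebra $K_{\boldsymbol{\sigma}}Q$ is the $K$-ring generated by trivial paths $e_v$ and arrows $a$ subject to $\sum e_v=1$, $e_v^2=e_v$, $e_ue_v=0$ ($u\neq v$), $e_v\lambda=\lambda e_v$, $e_{h(a)}a=a=ae_{t(a)}$, $a\lambda=\sigma_a(\lambda)a$. Let $\Lambda=K_{\boldsymbol{\sigma}}Q/\langle Z\rangle$. Let $Q'=Q^{\mathrm{cut}}(Z)$ be the Zembyk excision (denoted in the paper by $Q$ with a scissors superscript): vertices $v'$ for non-relational $v$ and two distinct vertices $v(\sharp),v(\flat)$ for each relational $v$ (i.e. $v=t(b)=h(a)$ for some $ba\in Z$), arrows $a'$ for $a\in Q_1$, with heads/tails reattached at relational $v$ so that for $h(a)=v=t(b)$, $b'a'$ is a path in $Q'$ exactly when $ba\notin Z$. Let $\Gamma=K_{\boldsymbol{\sigma}'}Q'$ with $\sigma'_{a'}=\sigma_a$. (The map is induced by $e_v\mapsto e_{v'}$ for non-relational $v$, $e_u\mapsto e_{u(\sharp)}+e_{u(\flat)}$ for relational $u$, $a\mapsto a'$.) *)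

(* Defs.v *)
From HB Require Import structures.
From mathcomp Require Import all_boot all_order all_algebra.
Set Implicit Arguments. Unset Strict Implicit. Unset Printing Implicit Defensive.
Import GRing.Theory.
Local Open Scope ring_scope.

(* A (finite) quiver is given by finite types V (vertices), A (arrows) and
   head/tail maps hd tl : A -> V; an arrow a goes from tl a to hd a.
   A path of length two "b a" (first a, then b) is composable iff hd a = tl b.
   The relation set Z is a boolean relation on arrows: Z b a means ba \in Z. *)

Definition is_division_ring (K : unitRingType) : Prop :=
  forall x : K, x != 0 -> x \is a GRing.unit.

Definition is_ring_aut (K : unitRingType) (s : {rmorphism K -> K}) : Prop :=
  bijective s.

Section Gentle.
Variables (V A : finType) (hd tl : A -> V) (Z : rel A).

(* Admissible (nontrivial) paths, written in traversal order [:: a1; a2; ...; an]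
   (a1 first): consecutive arrows are composable and no length-two subpath lies in Z. *)
Definition admissible_path (p : seq A) : bool :=
  sorted (fun a b => (hd a == tl b) && ~~ Z b a) p.

Definition locally_gentle : Prop :=
  [/\
      forall b a, Z b a -> hd a = tl b,
      forall v, #|[pred a | hd a == v]| <= 2 /\ #|[pred a | tl a == v]| <= 2,
      forall a, #|[pred b | (tl b == hd a) && Z b a]| <= 1 /\
                #|[pred b | (tl b == hd a) && ~~ Z b a]| <= 1
    &
      forall b, #|[pred a | (hd a == tl b) && Z b a]| <= 1 /\
                #|[pred a | (hd a == tl b) && ~~ Z b a]| <= 1 ]%N.

(* Gentle pair: locally gentle with finitely many admissible paths
   (trivial paths are finitely many since V is finite). *)
Definition gentle_pair : Prop :=
  locally_gentle /\
  exists s : seq (seq A), forall p, admissible_path p -> p \in s.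

Definition relational (v : V) : bool :=
  [exists b, exists a, [&& Z b a, tl b == v & hd a == v]].

(** Vertices of the Zembyk excision: (v, false) for every v ("v'" if v is
    non-relational, "v(flat)" if relational), and (v, true) ("v(sharp)")
    for relational v only. *)
Definition cut_vertex := {x : V * bool | x.2 ==> relational x.1}.

(** hd', tl' : A -> cut_vertex define the Zembyk excision Q^cut(Z) (with arrow
    set A, arrow a' being a): heads/tails lie over the original ones, and for
    h(a) = v = t(b), b'a' is a path in Q' exactly when ba is not in Z. *)
Definition zembyk_excision (hd' tl' : A -> cut_vertex) : Prop :=
  [/\ forall a, (val (hd' a)).1 = hd a,
      forall a, (val (tl' a)).1 = tl a
    & forall a b, hd a = tl b -> (hd' a = tl' b <-> ~~ Z b a)].

End Gentle.

Section Semilinear.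
Variables (K : unitRingType) (V A : finType) (hd tl : A -> V)
          (sigma : A -> {rmorphism K -> K}) (Z : rel A).

Definition sl_relations (R : pzRingType) (iota : {rmorphism K -> R})
    (e : V -> R) (x : A -> R) : Prop :=
  (\sum_(v : V) e v = 1) /\
  (forall v, e v * e v = e v) /\
  (forall u v, u != v -> e u * e v = 0) /\
  (forall v (l : K), e v * iota l = iota l * e v) /\
  (forall a, e (hd a) * x a = x a /\ x a * e (tl a) = x a) /\
  (forall a (l : K), x a * iota l = iota (sigma a l) * x a) /\
  (forall b a, Z b a -> x b * x a = 0).

(** (R, iota, e, x) is the K-ring generated by the e_v and the arrows subject
    to the relations above, i.e. it has the universal property of the
    presented ring K_sigma Q / <Z> (among rings under K). *)
Definition sl_presents (R : pzRingType) (iota : {rmorphism K -> R})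
    (e : V -> R) (x : A -> R) : Prop :=
  sl_relations iota e x /\
  forall (S : pzRingType) (iota' : {rmorphism K -> S}) (e' : V -> S) (x' : A -> S),
    sl_relations iota' e' x' ->
    (exists phi : {rmorphism R -> S},
        [/\ forall l, phi (iota l) = iota' l, forall v, phi (e v) = e' v
          & forall a, phi (x a) = x' a]) /\
    (forall phi psi : {rmorphism R -> S},
        (forall l, phi (iota l) = iota' l) -> (forall v, phi (e v) = e' v) ->
        (forall a, phi (x a) = x' a) ->
        (forall l, psi (iota l) = iota' l) -> (forall v, psi (e v) = e' v) ->
        (forall a, psi (x a) = x' a) ->
        phi =1 psi).

End Semilinear.

Arguments zembyk_excision {V A} hd tl Z hd' tl'.

(* Main.v *)
From HB Require Import structures.
From mathcomp Require Import all_boot all_order all_algebra.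
From mathcomp Require Import boolp.
Require Import Defs.
Set Implicit Arguments. Unset Strict Implicit. Unset Printing Implicit Defensive.
Import GRing.Theory.
Local Open Scope ring_scope.

Section Endo.
Variable M : zmodType.
Record endo := Endo { eap :> M -> M; _ : forall x y, eap (x + y) = eap x + eap y }.
HB.instance Definition _ := gen_eqMixin endo.
HB.instance Definition _ := gen_choiceMixin endo.

Lemma endoP (f g : endo) : (forall m, f m = g m) -> f = g.
Proof.
case: f g => f Hf [g Hg] /= H.
have E : f = g by apply: funext.
subst g; congr Endo; exact: Prop_irrelevance.
Qed.

Lemma eap_add (f : endo) x y : f (x + y) = f x + f y.
Proof. by case: f. Qed.
Lemma eap0 (f : endo) : f 0 = 0.
Proof. have := eap_add f 0 0; rewrite addr0 => H; apply/(addrI (f 0)); rewrite -H addr0 //. Qed.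
Lemma eapN (f : endo) x : f (- x) = - f x.
Proof. apply/(addrI (f x)); rewrite -eap_add !subrr eap0 //. Qed.

Definition e0 : endo := @Endo (fun _ => 0) (fun _ _ => esym (addr0 0)).
Fact e_opp_proof (f : endo) x y : - f (x + y) = - f x + - f y.
Proof. by rewrite eap_add opprD. Qed.
Definition eopp (f : endo) : endo := Endo (e_opp_proof f).
Fact e_add_proof (f g : endo) x y : f (x + y) + g (x + y) = (f x + g x) + (f y + g y).
Proof. by rewrite !eap_add addrACA. Qed.
Definition eadd (f g : endo) : endo := Endo (e_add_proof f g).
Fact e1_proof x y : (x + y : M) = x + y. Proof. by []. Qed.
Definition e1 : endo := Endo e1_proof.
Fact e_mul_proof (f g : endo) x y : f (g (x + y)) = f (g x) + f (g y).
Proof. by rewrite !eap_add. Qed.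
Definition emul (f g : endo) : endo := Endo (e_mul_proof f g).

Fact eaddA : associative eadd. Proof. by move=> f g h; apply: endoP => m /=; rewrite addrA. Qed.
Fact eaddC : commutative eadd. Proof. by move=> f g; apply: endoP => m /=; rewrite addrC. Qed.
Fact eadd0 : left_id e0 eadd. Proof. by move=> f; apply: endoP => m /=; rewrite add0r. Qed.
Fact eaddN : left_inverse e0 eopp eadd. Proof. by move=> f; apply: endoP => m /=; rewrite addNr. Qed.
HB.instance Definition _ := GRing.isZmodule.Build endo eaddA eaddC eadd0 eaddN.
Fact emulA : associative emul. Proof. by move=> f g h; apply: endoP. Qed.
Fact emul1 : left_id e1 emul. Proof. by move=> f; apply: endoP. Qed.
Fact emulr1 : right_id e1 emul. Proof. by move=> f; apply: endoP. Qed.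
Fact emulDl : left_distributive emul eadd. Proof. by move=> f g h; apply: endoP. Qed.
Fact emulDr : right_distributive emul eadd.
Proof. by move=> f g h; apply: endoP => m /=; rewrite eap_add. Qed.
HB.instance Definition _ := GRing.Zmodule_isPzRing.Build endo emulA emul1 emulr1 emulDl emulDr.

Lemma endo_addE (f g : endo) m : (f + g) m = f m + g m. Proof. by []. Qed.
Lemma endo_mulE (f g : endo) m : (f * g) m = f (g m). Proof. by []. Qed.
Lemma endo_oneE m : (1 : endo) m = m. Proof. by []. Qed.
Lemma endo_zeroE m : (0 : endo) m = 0. Proof. by []. Qed.
Lemma endo_oppE (f : endo) m : (- f) m = - f m. Proof. by []. Qed.
Lemma endo_subE (f g : endo) m : (f - g) m = f m - g m. Proof. by []. Qed.
Lemma endo_sumE (I : Type) (r : seq I) (P : pred I) (F : I -> endo) m :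
  (\sum_(i <- r | P i) F i) m = \sum_(i <- r | P i) F i m.
Proof. by elim/big_rec2: _ => // i y f _ <-. Qed.
End Endo.
Section Ind.
Variables (K : unitRingType) (V A : finType) (hd tl : A -> V)
  (sigma : A -> {rmorphism K -> K}) (Z : rel A)
  (R : pzRingType) (iota : {rmorphism K -> R}) (e : V -> R) (x : A -> R).
Hypothesis HR : sl_presents hd tl sigma Z iota e x.
Variable P : R -> Prop.
Hypotheses (P1 : P 1) (PB : forall a b, P a -> P b -> P (a - b))
  (PM : forall a b, P a -> P b -> P (a * b))
  (Pi : forall l, P (iota l)) (Pe : forall v, P (e v)) (Px : forall a, P (x a)).

Definition Pb : {pred R} := fun r => `[< P r >].
Fact Pb_closed : subring_closed Pb.
Proof.
split; first by apply/asboolP.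
- by move=> a b /asboolP Ha /asboolP Hb; apply/asboolP; apply: PB.
- by move=> a b /asboolP Ha /asboolP Hb; apply/asboolP; apply: PM.
Qed.
HB.instance Definition _ := GRing.isSubringClosed.Build R Pb Pb_closed.
Record subR := SubR { subval : R; _ : subval \in Pb }.
HB.instance Definition _ := [isSub for subval].
HB.instance Definition _ := Choice.copy subR (sub_type subR).
HB.instance Definition _ := GRing.SubChoice_isSubPzRing.Build _ _ subR Pb_closed.

Fact iotaS_in l : iota l \in Pb. Proof. by apply/asboolP. Qed.
Definition iotaS l : subR := SubR (iotaS_in l).
Fact eS_in v : e v \in Pb. Proof. by apply/asboolP. Qed.
Definition eS v : subR := SubR (eS_in v).
Fact xS_in a : x a \in Pb. Proof. by apply/asboolP. Qed.
Definition xS a : subR := SubR (xS_in a).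

Fact iotaS_zmod : zmod_morphism iotaS.
Proof. by move=> a b; apply: val_inj; rewrite /= rmorphB. Qed.
Fact iotaS_mon : monoid_morphism iotaS.
Proof. by split; [apply: val_inj; rewrite /= rmorph1 | move=> a b; apply: val_inj; rewrite /= rmorphM]. Qed.
HB.instance Definition _ := GRing.isZmodMorphism.Build K subR iotaS iotaS_zmod.
HB.instance Definition _ := GRing.isMonoidMorphism.Build K subR iotaS iotaS_mon.

Lemma sl_ind r : P r.
Proof.
case: HR => [[H1 [H2 [H3 [H4 [H5 [H6 H7]]]]]] HU].
have Hrel : sl_relations hd tl sigma Z iotaS eS xS.
  split; first by apply: val_inj; rewrite rmorph_sum rmorph1.
  split; first by move=> v; apply: val_inj; rewrite rmorphM /= H2.
  split; first by move=> u v uv; apply: val_inj; rewrite rmorphM rmorph0 /= H3.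
  split; first by move=> v l; apply: val_inj; rewrite !rmorphM /= H4.
  split; first by move=> a; split; apply: val_inj; rewrite rmorphM /= ?(proj1 (H5 a)) ?(proj2 (H5 a)).
  split; first by move=> a l; apply: val_inj; rewrite !rmorphM /= H6.
  by move=> b a Hba; apply: val_inj; rewrite rmorphM rmorph0 /= H7.
have [[phi [Hp1 Hp2 Hp3]] _] := HU _ _ _ _ Hrel.
have [_ Huniq] := HU _ iota e x (proj1 HR).
have E : forall r, val (phi r) = r.
  move=> r0.
  have := Huniq (val \o phi) idfun.
  move=> /(_ _ _ _ _ _ _ r0); apply.
  - by move=> l /=; rewrite Hp1.
  - by move=> v /=; rewrite Hp2.
  - by move=> a /=; rewrite Hp3.
  - by [].
  - by [].
  - by [].
have := valP (phi r); rewrite E; by move/asboolP.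
Qed.
End Ind.

Section Main.
Variables (K : unitRingType) (Q0 Q1 : finType) (hd tl : Q1 -> Q0) (Z : rel Q1)
  (sigma : Q1 -> {rmorphism K -> K}).
Local Notation C := (cut_vertex hd tl Z).
Variables (hd' tl' : Q1 -> C).
Hypothesis Hcut : zembyk_excision hd tl Z hd' tl'.
Variable s : seq (seq Q1).
Hypothesis Hs : forall p, admissible_path hd tl Z p -> p \in s.

Definition s0 := [::] :: s.
Definition II := (C * seq_sub s0)%type.
Definition MM := {ffun II -> K}.
Fixpoint vpath (c : C) (q : seq Q1) : bool :=
  if q is a :: q' then (tl' a == c) && vpath (hd' a) q' else true.
Definition headI (i : II) : C := last i.1 (map hd' (val i.2)).
Definition ext (i : II) (a : Q1) : option II :=
  if vpath i.1 (rcons (val i.2) a)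
  then omap (fun q => (i.1, q)) (insub (rcons (val i.2) a)) else None.
Definition qnil : seq_sub s0 := Sub [::] (mem_head [::] s).

Lemma vpath_rcons c q a :
  vpath c (rcons q a) = vpath c q && (tl' a == last c (map hd' q)).
Proof.
elim: q c => [|b q IH] c /=; first by rewrite andbT.
by rewrite IH andbA.
Qed.

Lemma vpath_adm c q : vpath c q -> admissible_path hd tl Z q.
Proof.
case: Hcut => Hh Ht Hiff.
rewrite /admissible_path; case: q c => [|a q] c //= /andP [_].
elim: q a => [|b q IH] a //= /andP [/eqP E Hv].
rewrite (IH b Hv) andbT.
have Eab : hd a = tl b by rewrite -Hh -Ht E.
by rewrite Eab eqxx /=; apply/(Hiff _ _ Eab).
Qed.

Lemma ext_some i a j : ext i a = Some j ->
  [/\ j.1 = i.1, val j.2 = rcons (val i.2) a & vpath i.1 (rcons (val i.2) a)].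
Proof.
rewrite /ext; case: ifP => // Hv.
by case: insubP => //= u _ Hu [<-].
Qed.

Lemma ext_head i a j : ext i a = Some j -> headI j = hd' a.
Proof. by case/ext_some => E1 E2 _; rewrite /headI E2 E1 map_rcons last_rcons. Qed.

Lemma ext_tail i a j : ext i a = Some j -> headI i = tl' a.
Proof. by case/ext_some => _ _; rewrite vpath_rcons => /andP [_ /eqP]. Qed.

Lemma ext_vp i a : vpath i.1 (rcons (val i.2) a) ->
  exists2 u : seq_sub s0, val u = rcons (val i.2) a & ext i a = Some (i.1, u).
Proof.
move=> Hv; have Hin : rcons (val i.2) a \in s0.
  by rewrite inE Hs ?orbT //; apply: vpath_adm Hv.
exists (Sub (rcons (val i.2) a) Hin : seq_sub s0); first by rewrite SubK.
by rewrite /ext Hv insubT.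
Qed.

Lemma ext_nvp i a : ~~ vpath i.1 (rcons (val i.2) a) -> ext i a = None.
Proof. by rewrite /ext => /negbTE ->. Qed.

Fact Eop_proof (c : C) (m1 m2 : MM) :
  [ffun j => if headI j == c then (m1 + m2) j else 0] =
  [ffun j => if headI j == c then m1 j else 0] + [ffun j => if headI j == c then m2 j else 0].
Proof. by apply/ffunP => j; rewrite !ffunE; case: ifP; rewrite ?addr0. Qed.
Definition Eop c : endo MM := Endo (Eop_proof c).

Fact Xop_proof a (m1 m2 : MM) :
  [ffun j => \sum_i (if ext i a == Some j then sigma a ((m1 + m2) i) else 0)] =
  [ffun j => \sum_i (if ext i a == Some j then sigma a (m1 i) else 0)] +
  [ffun j => \sum_i (if ext i a == Some j then sigma a (m2 i) else 0)].
Proof.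
apply/ffunP => j; rewrite !ffunE -big_split /=; apply: eq_bigr => i _.
by rewrite ffunE rmorphD; case: ifP; rewrite ?addr0.
Qed.
Definition Xop a : endo MM := Endo (Xop_proof a).

Fact Lop_proof (l : K) (m1 m2 : MM) :
  [ffun j => l * (m1 + m2) j] = [ffun j => l * m1 j] + [ffun j => l * m2 j].
Proof. by apply/ffunP => j; rewrite !ffunE mulrDr. Qed.
Definition Lop l : endo MM := Endo (Lop_proof l).

Fact Lop_zmod : zmod_morphism Lop.
Proof. by move=> a b; apply: endoP => m; apply/ffunP => j; rewrite /= !ffunE mulrBl. Qed.
Fact Lop_mon : monoid_morphism Lop.
Proof.
split; first by apply: endoP => m; apply/ffunP => j; rewrite /= !ffunE mul1r.
by move=> a b; apply: endoP => m; apply/ffunP => j; rewrite /= !ffunE mulrA.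
Qed.
HB.instance Definition _ := GRing.isZmodMorphism.Build K (endo MM) Lop Lop_zmod.
HB.instance Definition _ := GRing.isMonoidMorphism.Build K (endo MM) Lop Lop_mon.

Lemma Gam_rel : sl_relations hd' tl' sigma (fun _ _ => false) Lop Eop Xop.
Proof.
split.
  apply: endoP => m; rewrite endo_sumE endo_oneE; apply/ffunP => j.
  rewrite sum_ffunE (bigD1 (headI j)) //= ffunE eqxx big1 ?addr0 // => c /negbTE.
  by rewrite ffunE eq_sym => ->.
split.
  by move=> c; apply: endoP => m; apply/ffunP => j; rewrite endo_mulE !ffunE; case: ifP => // ->. 
split.
  move=> u v uv; apply: endoP => m; apply/ffunP => j; rewrite endo_mulE endo_zeroE !ffunE.
  by case: eqP => // ->; rewrite (negbTE uv).
split.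
  by move=> v l; apply: endoP => m; apply/ffunP => j; rewrite !endo_mulE !ffunE; case: ifP; rewrite ?mulr0.
split.
  move=> a; split; apply: endoP => m; apply/ffunP => j; rewrite endo_mulE !ffunE.
    case: eqP => // Hj; symmetry; apply: big1 => i _.
    by case: eqP => // /eqP/eqP /ext_head Hh; case: Hj.
  apply: eq_bigr => i _; case: eqP => // /ext_tail Ht; by rewrite ffunE Ht eqxx.
split.
  move=> a l; apply: endoP => m; apply/ffunP => j; rewrite !endo_mulE !ffunE mulr_sumr.
  by apply: eq_bigr => i _; rewrite ffunE; case: ifP; rewrite ?mulr0 // rmorphM.
by [].
Qed.

Variables (Lam : pzRingType) (iotaL : {rmorphism K -> Lam}) (eL : Q0 -> Lam) (xL : Q1 -> Lam).
Hypothesis HLam : sl_presents hd tl sigma Z iotaL eL xL.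
Variables (Gam : pzRingType) (iotaG : {rmorphism K -> Gam}) (eG : C -> Gam) (xG : Q1 -> Gam).
Variable Delta : {rmorphism Lam -> Gam}.
Hypotheses (HDi : forall l, Delta (iotaL l) = iotaG l)
  (HDe : forall v, Delta (eL v) = \sum_(c | (val c).1 == v) eG c)
  (HDx : forall a, Delta (xL a) = xG a).
Variable rho : {rmorphism Gam -> endo MM}.
Hypotheses (Hri : forall l, rho (iotaG l) = Lop l) (Hre : forall c, rho (eG c) = Eop c)
  (Hrx : forall a, rho (xG a) = Xop a).

Definition pathL (q : seq Q1) : Lam := \prod_(a <- rev q) xL a.
Lemma pathL_rcons q a : pathL (rcons q a) = xL a * pathL q.
Proof. by rewrite /pathL rev_rcons big_cons. Qed.

Definition ww (i : II) : Lam :=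
  if vpath i.1 (val i.2) then
    (if val i.2 == [::] then (if (val i.1).2 then 0 else eL (val i.1).1) else pathL (val i.2))
  else 0.
Definition beta (m : MM) : Lam := \sum_i iotaL (m i) * ww i.
Definition NN (m : MM) : Prop :=
  forall c c' : C, (val c).1 = (val c').1 -> m (c, qnil) = m (c', qnil).

Let HL := proj1 HLam.
Lemma HL_all : sl_relations hd tl sigma Z iotaL eL xL. Proof. exact: HL. Qed.
Lemma HL1 : \sum_v eL v = 1. Proof. by case: HL_all => H _; exact: H. Qed.
Lemma HL2 v : eL v * eL v = eL v. Proof. by case: HL_all => _ [H _]; exact: H. Qed.
Lemma HL3 u v : u != v -> eL u * eL v = 0. Proof. by case: HL_all => _ [_ [H _]]; exact: H. Qed.
Lemma HL4 v l : eL v * iotaL l = iotaL l * eL v. Proof. by case: HL_all => _ [_ [_ [H _]]]; exact: H. Qed.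
Lemma HL5 a : eL (hd a) * xL a = xL a /\ xL a * eL (tl a) = xL a.
Proof. by case: HL_all => _ [_ [_ [_ [H _]]]]; exact: H. Qed.
Lemma HL6 a l : xL a * iotaL l = iotaL (sigma a l) * xL a.
Proof. by case: HL_all => _ [_ [_ [_ [_ [H _]]]]]; exact: H. Qed.
Lemma HL7 b a : Z b a -> xL b * xL a = 0.
Proof. by case: HL_all => _ [_ [_ [_ [_ [_ H]]]]]; exact: H. Qed.

Lemma eLe u v : eL u * eL v = if u == v then eL v else 0.
Proof. by case: eqP => [->|/eqP]; [apply: HL2 | apply: HL3]. Qed.

Lemma eL_x v b : eL v * xL b = if hd b == v then xL b else 0.
Proof.
rewrite -(proj1 (HL5 b)) mulrA eLe eq_sym; case: eqP => // _; by rewrite mul0r.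
Qed.

Lemma eL_w v j : eL v * ww j = if (val (headI j)).1 == v then ww j else 0.
Proof.
case: j => c q; rewrite /ww /headI /=.
case: ifP => _; last by rewrite mulr0; case: ifP.
case/lastP: (val q) => [|q' b] /=.
  by case: ifP; rewrite ?mulr0 ?if_same // => _; rewrite eLe eq_sym.
have -> : (rcons q' b == [::]) = false by case: q'.
rewrite pathL_rcons mulrA eL_x map_rcons last_rcons.
case: Hcut => Hh _ _; rewrite Hh; by case: ifP; rewrite ?mul0r.
Qed.

Definition Inv (x : Lam) : Prop :=
  forall m, NN m -> NN (rho (Delta x) m) /\ beta (rho (Delta x) m) = x * beta m.

Lemma betaB m1 m2 : beta (m1 - m2) = beta m1 - beta m2.
Proof. by rewrite /beta -sumrB; apply: eq_bigr => i _; rewrite !ffunE rmorphB mulrBl. Qed.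

Lemma Inv1 : Inv 1.
Proof. by move=> m Hm; rewrite rmorph1 rmorph1 endo_oneE mul1r. Qed.

Lemma InvB x y : Inv x -> Inv y -> Inv (x - y).
Proof.
move=> Hx Hy m Hm; have [Nx Bx] := Hx m Hm; have [Ny By] := Hy m Hm.
rewrite !rmorphB endo_subE; split; last by rewrite betaB Bx By mulrBl.
by move=> c c' E; rewrite !ffunE (Nx c c' E) (Ny c c' E).
Qed.

Lemma InvM x y : Inv x -> Inv y -> Inv (x * y).
Proof.
move=> Hx Hy m Hm; have [Ny By] := Hy m Hm; have [Nx Bx] := Hx _ Ny.
by rewrite !rmorphM endo_mulE; split => //; rewrite Bx By mulrA.
Qed.

Lemma Invi l : Inv (iotaL l).
Proof.
move=> m Hm; rewrite HDi Hri; split.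
  by move=> c c' E; rewrite !ffunE (Hm c c' E).
rewrite /beta mulr_sumr; apply: eq_bigr => i _; by rewrite ffunE rmorphM mulrA.
Qed.

Lemma sumE_v v m j : (\sum_(c | (val c).1 == v) Eop c m) j =
  if (val (headI j)).1 == v then m j else 0.
Proof.
rewrite sum_ffunE; case: eqP => Hj.
  rewrite (bigD1 (headI j)) /=; last by rewrite Hj.
  rewrite ffunE eqxx big1 ?addr0 // => c /andP [_ /negbTE].
  by rewrite ffunE eq_sym => ->.
apply: big1 => c /eqP Hc; rewrite ffunE; case: eqP => // E.
by case: Hj; rewrite E.
Qed.

Lemma Inve v : Inv (eL v).
Proof.
move=> m Hm; rewrite HDe rmorph_sum.
rewrite (eq_bigr (fun c => Eop c)); last by move=> c _; rewrite Hre.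
rewrite endo_sumE; split.
  by move=> c c' E; rewrite !sumE_v /headI /= E (Hm c c' E).
rewrite /beta mulr_sumr; apply: eq_bigr => j _.
rewrite sumE_v mulrA HL4 -mulrA eL_w.
by case: ifP; rewrite ?rmorph0 ?mul0r ?mulr0.
Qed.

Lemma Xop_nil a m c : Xop a m (c, qnil) = 0.
Proof.
rewrite ffunE; apply: big1 => i _; case: eqP => // /ext_some [_ E _].
by move: E; rewrite /= ; case: (val i.2).
Qed.

Lemma Wsum a i (F : II -> Lam) :
  \sum_j (if ext i a == Some j then F j else 0) = oapp F 0 (ext i a).
Proof.
case: (ext i a) => [j0|] /=; last by apply: big1.
rewrite (bigD1 j0) //= eqxx big1 ?addr0 // => j Hj.
by case: eqP => // [[E]]; rewrite E eqxx in Hj.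
Qed.

Lemma x_eL a u : xL a * eL u = if tl a == u then xL a else 0.
Proof.
rewrite -{1}(proj2 (HL5 a)) -mulrA eLe; case: eqP => [<-|_]; [exact: (proj2 (HL5 a)) | by rewrite mulr0].
Qed.

Lemma pathL1 a : pathL [:: a] = xL a.
Proof. by rewrite /pathL /= big_cons big_nil mulr1. Qed.

Lemma Wnonnil a i : val i.2 != [::] -> oapp ww 0 (ext i a) = xL a * ww i.
Proof.
case: i => c [q qin] /= Hnn; rewrite {2}/ww /=.
case Hv: (vpath c q); last first.
  by rewrite ext_nvp /= ?mulr0 // vpath_rcons Hv.
rewrite (negbTE Hnn).
case Ht: (tl' a == last c (map hd' q)).
  have Hv' : vpath c (rcons q a) by rewrite vpath_rcons Hv Ht.
  have [u Hu ->] := @ext_vp (c, SeqSub qin) a Hv'.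
  rewrite /ww /= Hu Hv' pathL_rcons.
  by have -> : (rcons q a == [::]) = false by case: (q).
rewrite ext_nvp /=; last by rewrite vpath_rcons Hv Ht.
move: Hnn Ht; case/lastP: q {qin Hv} => [//|q' b] _.
rewrite map_rcons last_rcons pathL_rcons mulrA => Ht.
case: Hcut => Hh Htl Hiff.
case E: (hd b == tl a).
  have Hz : Z a b.
    apply/negPn/negP => Hn; move/(Hiff _ _ (eqP E)): Hn => Hn.
    by rewrite Hn eqxx in Ht.
  by rewrite HL7 // mul0r.
rewrite -(proj2 (HL5 a)) -(proj1 (HL5 b)) -!mulrA (mulrA (eL _)) eLe eq_sym E /=.
by rewrite mul0r mulr0.
Qed.

Definition cf (v : Q0) : C := @exist _ _ (v, false) isT.

Lemma sum_split (H : II -> Lam) :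
  \sum_i H i = \sum_c (H (c, qnil) + \sum_(q | q != qnil) H (c, q)).
Proof.
transitivity (\sum_(p : II) H (p.1, p.2)); first by apply: eq_bigr => [[]].
rewrite -(pair_bigA _ (fun c q => H (c, q))) /=; apply: eq_bigr => c _; by rewrite (bigD1 qnil).
Qed.

Lemma nonnil (q : seq_sub s0) : q != qnil -> val q != [::].
Proof. by apply: contra => /eqP E; apply/eqP/val_inj; rewrite E. Qed.

Lemma cf_only v (c : C) : c != cf v -> (val c).1 == v -> (val c).2 = true.
Proof.
case: c => [[u b] Hc] /= Hne /eqP Eu; case: b Hc Hne => // Hc Hne.
by case/eqP: Hne; apply: val_inj; rewrite /= Eu.
Qed.

Lemma ww_nil c : ww (c, qnil) = if (val c).2 then 0 else eL (val c).1.
Proof. by []. Qed.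

Lemma Invx a : Inv (xL a).
Proof.
move=> m Hm; rewrite HDx Hrx; split.
  by move=> c c' _; rewrite !Xop_nil.
set G := fun i => iotaL (sigma a (m i)).
have L1 : beta (Xop a m) = \sum_i G i * oapp ww 0 (ext i a).
  rewrite /beta.
  transitivity (\sum_j \sum_i (if ext i a == Some j then G i * ww j else 0)).
    apply: eq_bigr => j _; rewrite ffunE rmorph_sum mulr_suml; apply: eq_bigr => i _.
    by case: ifP; rewrite ?rmorph0 ?mul0r.
  rewrite exchange_big; apply: eq_bigr => i _; rewrite Wsum.
  by case: (ext i a) => [j|] /=; rewrite ?mulr0.
have L2 : xL a * beta m = \sum_i G i * (xL a * ww i).
  by rewrite /beta mulr_sumr; apply: eq_bigr => i _; rewrite mulrA HL6 mulrA.
rewrite L1 L2 !sum_split !big_split /=; congr (_ + _); last first.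
  apply: eq_bigr => c _; apply: eq_bigr => q Hq; rewrite Wnonnil //.
transitivity (G (tl' a, qnil) * xL a).
  rewrite (bigD1 (tl' a)) //= big1 ?addr0.
    have Hv' : vpath (tl' a) (rcons (val qnil) a) by rewrite /= eqxx.
    have [u Hu ->] := @ext_vp (tl' a, qnil) a Hv'.
    by rewrite /= /ww /= Hu /= eqxx pathL1.
  move=> c Hc; rewrite ext_nvp ?mulr0 //= andbT eq_sym; exact: Hc.
case: Hcut => Hh Htl _.
rewrite (bigD1 (cf (tl a))) //= big1 ?addr0.
  rewrite ww_nil /= x_eL eqxx; congr (_ * _); rewrite /G (Hm (tl' a) (cf (tl a))) //.
move=> c Hc; rewrite ww_nil; case: ifP => H2; first by rewrite !mulr0.
rewrite x_eL; case: eqP => [E|]; last by rewrite mulr0.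
by rewrite (cf_only Hc) in H2 => //; rewrite E.
Qed.

Definition m0 : MM := [ffun i => if val i.2 == [::] then 1 else 0].
Lemma NN_m0 : NN m0. Proof. by move=> c c' _; rewrite !ffunE. Qed.

Lemma beta_m0 : beta m0 = 1.
Proof.
rewrite /beta sum_split -HL1.
rewrite (eq_bigr (fun c : C => if (val c).2 then 0 else eL (val c).1)); last first.
  move=> c _; rewrite big1 ?addr0; last first.
    by move=> q Hq; rewrite ffunE (negbTE (nonnil Hq)) rmorph0 mul0r.
  by rewrite ffunE /= ?eqxx rmorph1 mul1r.
rewrite (partition_big (fun c : C => (val c).1) xpredT) //=.
apply: eq_bigr => v _; rewrite (bigD1 (cf v)) //= big1 ?addr0 // => c /andP [E Hc].
by rewrite (cf_only Hc E).
Qed.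

Lemma Delta_inj : injective Delta.
Proof.
move=> x y Exy.
have Ix : forall z, Inv z.
  apply: (sl_ind HLam) => //; [exact: Inv1 | exact: InvB | exact: InvM | exact: Invi | exact: Inve | exact: Invx].
have := proj2 (Ix x m0 NN_m0); rewrite Exy (proj2 (Ix y m0 NN_m0)) beta_m0 !mulr1.
by [].
Qed.
End Main.

Section DeltaRel.
Variables (K : unitRingType) (Q0 Q1 : finType) (hd tl : Q1 -> Q0) (Z : rel Q1)
  (sigma : Q1 -> {rmorphism K -> K}).
Local Notation C := (cut_vertex hd tl Z).
Variables (hd' tl' : Q1 -> C).
Hypothesis Hcut : zembyk_excision hd tl Z hd' tl'.
Hypothesis HZ1 : forall b a, Z b a -> hd a = tl b.
Variables (Gam : pzRingType) (iotaG : {rmorphism K -> Gam}) (eG : C -> Gam) (xG : Q1 -> Gam).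
Hypothesis HG : sl_relations hd' tl' sigma (fun _ _ => false) iotaG eG xG.

Let G1 : \sum_c eG c = 1. Proof. by case: HG => H _; exact: H. Qed.
Let G2 c : eG c * eG c = eG c. Proof. by case: HG => _ [H _]; exact: H. Qed.
Let G3 u v : u != v -> eG u * eG v = 0. Proof. by case: HG => _ [_ [H _]]; exact: H. Qed.
Let G4 v l : eG v * iotaG l = iotaG l * eG v. Proof. by case: HG => _ [_ [_ [H _]]]; exact: H. Qed.
Let G5 a : eG (hd' a) * xG a = xG a /\ xG a * eG (tl' a) = xG a.
Proof. by case: HG => _ [_ [_ [_ [H _]]]]; exact: H. Qed.
Let G6 a l : xG a * iotaG l = iotaG (sigma a l) * xG a.
Proof. by case: HG => _ [_ [_ [_ [_ [H _]]]]]; exact: H. Qed.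

Let eprod1 (P : pred C) c0 : (\sum_(c | P c) eG c) * eG c0 = if P c0 then eG c0 else 0.
Proof.
rewrite mulr_suml; case Pc0: (P c0).
  rewrite (bigD1 c0) //= G2 big1 ?addr0 // => c /andP [_ ne]; exact: G3.
apply: big1 => c Pc; apply: G3; apply: contraTneq Pc => ->; by rewrite Pc0.
Qed.
Let eprod1r (P : pred C) c0 : eG c0 * (\sum_(c | P c) eG c) = if P c0 then eG c0 else 0.
Proof.
rewrite mulr_sumr; case Pc0: (P c0).
  rewrite (bigD1 c0) //= G2 big1 ?addr0 // => c /andP [_ ne]; apply: G3; by rewrite eq_sym.
apply: big1 => c Pc; apply: G3; apply: contraTneq Pc => <-; by rewrite Pc0.
Qed.
Let eprod (P Q : pred C) :
  (\sum_(c | P c) eG c) * (\sum_(c | Q c) eG c) = \sum_(c | P c && Q c) eG c.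
Proof.
rewrite mulr_sumr [RHS]big_mkcond /= [LHS]big_mkcond /=; apply: eq_bigr => c _.
by rewrite eprod1 andbC; case: (Q c).
Qed.

Lemma Delta_rel : sl_relations hd tl sigma Z iotaG
   (fun v => \sum_(c | (val c).1 == v) eG c) xG.
Proof.
case: Hcut => Hh Ht Hiff.
split.
  by rewrite -G1 (partition_big (fun c : C => (val c).1) xpredT) //=.
split.
  by move=> v; rewrite eprod; apply: eq_bigl => c; rewrite andbb.
split.
  move=> u v uv; rewrite eprod big_pred0 // => c.
  apply/negbTE/negP => /andP [/eqP -> /eqP E]; by rewrite E eqxx in uv.
split.
  by move=> v l; rewrite mulr_suml mulr_sumr; apply: eq_bigr => c _; rewrite G4.
split.
  move=> a; split.
    by rewrite -(proj1 (G5 a)) mulrA eprod1 Hh eqxx.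
  by rewrite -(proj2 (G5 a)) -mulrA eprod1r Ht eqxx.
split; first exact: G6.
move=> b a Zba.
have Hne : tl' b != hd' a.
  apply/eqP => E; have := (Hiff _ _ (HZ1 Zba)); rewrite E => [[H _]].
  by move: (H erefl); rewrite Zba.
transitivity ((xG b * eG (tl' b)) * (eG (hd' a) * xG a)).
  by rewrite (proj2 (G5 b)) (proj1 (G5 a)).
by rewrite mulrA -(mulrA (xG b)) G3 // mulr0 mul0r.
Qed.
End DeltaRel.


Theorem lemma5p21
  (K : unitRingType) (Kdiv : is_division_ring K)
  (Q0 Q1 : finType) (hd tl : Q1 -> Q0) (Z : rel Q1)
  (HZ : gentle_pair hd tl Z)
  (sigma : Q1 -> {rmorphism K -> K}) (Hsigma : forall a, is_ring_aut (sigma a))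
  (* Lambda = K_sigma Q / <Z> *)
  (Lam : pzRingType) (iotaL : {rmorphism K -> Lam}) (eL : Q0 -> Lam) (xL : Q1 -> Lam)
  (HLam : sl_presents hd tl sigma Z iotaL eL xL)
  (* Q' = Zembyk excision of (Q, Z) *)
  (hd' tl' : Q1 -> cut_vertex hd tl Z) (Hcut : zembyk_excision hd tl Z hd' tl')
  (* Gamma = K_sigma' Q' (no relations), sigma'_{a'} = sigma_a *)
  (Gam : pzRingType) (iotaG : {rmorphism K -> Gam})
  (eG : cut_vertex hd tl Z -> Gam) (xG : Q1 -> Gam)
  (HGam : sl_presents hd' tl' sigma (fun _ _ => false) iotaG eG xG) :
  exists Delta : {rmorphism Lam -> Gam},
    injective Delta /\ (forall l : K, Delta (iotaL l) = iotaG l).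
Proof.
case: HZ => [[HZ1 _ _ _] [s Hs]].
have DR := Delta_rel Hcut HZ1 (proj1 HGam).
have [[Delta [HDi HDe HDx]] _] := (proj2 HLam) _ _ _ _ DR.
have [[rho [Hri Hre Hrx]] _] := (proj2 HGam) _ _ _ _ (Gam_rel sigma hd' tl' s).
exists Delta; split => //.
exact: (Delta_inj Hcut Hs HLam HDi HDe HDx Hri Hre Hrx).
Qed.
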